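(* In the setting described in the context, every feasible solution $(\alpha,c,u,\pi,\lambda,\mu)$ of RLO-IU-SD satisfies, for some $\hat{i}\in I$, \[ \sum_{j\in J}a_{\hat{i}j}\hat{x}_j-\sum_{j\in J_{\hat{i}}}\alpha_{\hat{i}j}|\hat{x}_j|=b_{\hat{i}},\quad \sum_{j\in J}a_{ij}\hat{x}_j-\sum_{j\in J_i}\alpha_{ij}|\hat{x}_j|\ge b_i\ \ \forall i\in I,\quad \alpha_{ij}\ge0\ \ \forall j\in J_i,i\in I. \] Conversely, for every $\alpha$ satisfying these three conditions for some $\hat{i}\in I$, there exists $(c,u,\pi,\lambda,\mu)$ such that $(\alpha,c,u,\pi,\lambda,\mu)$ is feasible for RLO-IU-SD.
   Context: Let $I=\{1,\dots,m\}$, $J=\{1,\dots,n\}$. Given are $a_{ij}\in\mathbb{R}$, $b\in\mathbb{R}^m$, nonempty index sets $J_i\subseteq J$ ($i\in I$), an observed point $\hat{x}\in\mathbb{R}^n$, prior vectors $\hat{\alpha}_i\in\mathbb{R}^{|J_i|}$, real weights $\xi_i$, and a norm $\|\cdot\|$. The problem RLO-IU-SD is \[ \min_{\alpha,c,u,\pi,\lambda,\mu}\ \sum_{i\in I}\xi_i\|\alpha_i-\hat{\alpha}_i\| \] subject to: $\sum_{j\in J}c_j\hat{x}_j-\sum_{i\in I}b_i\pi_i=0$; $\alpha_{ij}\hat{x}_j+u_{ij}\ge0$ and $-\alpha_{ij}\hat{x}_j+u_{ij}\ge0$ for all $j\in J_i,i\in I$; $\sum_{j\in J}a_{ij}\hat{x}_j-\sum_{j\in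 J_i}u_{ij}\ge b_i$ for all $i\in I$; $\alpha_{ij}\ge0$ for all $j\in J_i,i\in I$; $\sum_{i\in I}\pi_i=1$; $\sum_{i\in I}a_{ij}\pi_i+\sum_{i\in I:j\in J_i}\alpha_{ij}(\lambda_{ij}-\mu_{ij})=c_j$ for all $j\in J$; $\pi_i=\lambda_{ij}+\mu_{ij}$ for all $j\in J_i,i\in I$; $\pi_i,\lambda_{ij},\mu_{ij}\ge0$ for all $j\in J_i,i\in I$. Here $\alpha_i=(\alpha_{ij})_{j\in J_i}$, $c\in\mathbb{R}^n$, $\pi\in\mathbb{R}^m$. *)

(* Defs.v *)
From HB Require Import structures.
From mathcomp Require Import all_boot all_order all_algebra.
Set Implicit Arguments. Unset Strict Implicit. Unset Printing Implicit Defensive.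
Import Order.TTheory GRing.Theory Num.Theory.
Local Open Scope ring_scope.

(* Variables indexed by pairs (i,j) with j in J_i are encoded as functions
   'I_m -> 'I_n -> R; only the entries with j \in JJ i are ever used. *)
Definition rlo_iu_sd_feasible (R : realFieldType) (m n : nat)
  (a : 'I_m -> 'I_n -> R) (b : 'I_m -> R) (JJ : 'I_m -> {set 'I_n})
  (xh : 'I_n -> R)
  (alpha : 'I_m -> 'I_n -> R) (c : 'I_n -> R) (u : 'I_m -> 'I_n -> R)
  (pi : 'I_m -> R) (lam mu : 'I_m -> 'I_n -> R) : Prop :=
  (\sum_(j < n) c j * xh j - \sum_(i < m) b i * pi i = 0) /\
  (forall i j, j \in JJ i ->
     0 <= alpha i j * xh j + u i j /\ 0 <= - (alpha i j * xh j) + u i j) /\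
  (forall i, b i <= \sum_(j < n) a i j * xh j - \sum_(j in JJ i) u i j) /\
  (forall i j, j \in JJ i -> 0 <= alpha i j) /\
  (\sum_(i < m) pi i = 1) /\
  (forall j, \sum_(i < m) a i j * pi i
             + \sum_(i < m | j \in JJ i) alpha i j * (lam i j - mu i j) = c j) /\
  (forall i j, j \in JJ i -> pi i = lam i j + mu i j) /\
  (forall i, 0 <= pi i) /\
  (forall i j, j \in JJ i -> 0 <= lam i j /\ 0 <= mu i j).

Definition lemma4_cond (R : realFieldType) (m n : nat)
  (a : 'I_m -> 'I_n -> R) (b : 'I_m -> R) (JJ : 'I_m -> {set 'I_n})
  (xh : 'I_n -> R) (alpha : 'I_m -> 'I_n -> R) (ih : 'I_m) : Prop :=
  [/\ \sum_(j < n) a ih j * xh j - \sum_(j in JJ ih) alpha ih j * `|xh j| = b ih,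
      (forall i, b i <= \sum_(j < n) a i j * xh j - \sum_(j in JJ i) alpha i j * `|xh j|) &
      (forall i j, j \in JJ i -> 0 <= alpha i j)].

(* Main.v *)
Require Import Defs.
From HB Require Import structures.
From mathcomp Require Import all_boot all_order all_algebra.
From mathcomp Require Import ring lra.
Import Order.TTheory GRing.Theory Num.Theory.
Local Open Scope ring_scope.

Lemma sum_single (R : realFieldType) m (F : 'I_m -> R) ih :
  (forall i, i != ih -> F i = 0) -> \sum_(i < m) F i = F ih.
Proof.
move=> H; rewrite (bigD1 ih) //= big1 ?addr0 // => i /H //.
Qed.

Lemma dual_identity (R : realFieldType) (m n : nat)
  (a : 'I_m -> 'I_n -> R) (b : 'I_m -> R) (JJ : 'I_m -> {set 'I_n})
  (xh : 'I_n -> R) (alpha : 'I_m -> 'I_n -> R) (pi : 'I_m -> R)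
  (lam mu : 'I_m -> 'I_n -> R) :
  \sum_(j < n) (\sum_(i < m) a i j * pi i
             + \sum_(i < m | j \in JJ i) alpha i j * (lam i j - mu i j)) * xh j
  - \sum_(i < m) b i * pi i
  = \sum_(i < m) (pi i * (\sum_(j < n) a i j * xh j - b i)
        + \sum_(j in JJ i) alpha i j * (lam i j - mu i j) * xh j).
Proof.
under eq_bigr => j _ do rewrite mulrDl.
rewrite big_split [RHS]big_split /= addrAC; congr (_ + _).
  under eq_bigr => j _ do rewrite mulr_suml.
  rewrite exchange_big /= -sumrB; apply: eq_bigr => i _.
  rewrite mulrBr mulr_sumr; congr (_ - _); last by rewrite mulrC.
  by apply: eq_bigr => j _; rewrite mulrAC mulrC.
under eq_bigr => j _ do rewrite mulr_suml big_mkcond /=.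
rewrite exchange_big /=; apply: eq_bigr => i _.
rewrite [RHS]big_mkcond /=; apply: eq_bigr => j _.
by case: ifP => _; rewrite ?mul0r.
Qed.

Theorem lemma4 (R : realFieldType) (m n : nat)
  (a : 'I_m -> 'I_n -> R) (b : 'I_m -> R) (JJ : 'I_m -> {set 'I_n})
  (xh : 'I_n -> R)
  (hJ : forall i, JJ i != set0) :
  (forall alpha c u pi lam mu,
     rlo_iu_sd_feasible a b JJ xh alpha c u pi lam mu ->
     exists ih, lemma4_cond a b JJ xh alpha ih) /\
  (forall alpha, (exists ih, lemma4_cond a b JJ xh alpha ih) ->
     exists c u pi lam mu, rlo_iu_sd_feasible a b JJ xh alpha c u pi lam mu).
Proof.
split.
  move=> alpha c u pi lam mu [Hd [Hu [Hb [Ha [Hp [Hc [Hl [Hpi Hlm]]]]]]]].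
  set s := fun i => \sum_(j < n) a i j * xh j - \sum_(j in JJ i) alpha i j * `|xh j| - b i.
  have s_ge0 : forall i, 0 <= s i.
    move=> i; rewrite /s subr_ge0; apply: le_trans (Hb i) _.
    rewrite lerD2l lerN2; apply: ler_sum => j hj.
    have [h1 h2] := Hu i j hj; have := Ha i j hj.
    case: (lerP 0 (xh j)) => hx.
      rewrite ger0_norm //; lra.
    rewrite ltr0_norm //; nra.
  have Hsum : \sum_(i < m) pi i * s i = 0.
    apply/eqP; rewrite eq_le sumr_ge0 ?andbT; last by move=> i _; rewrite mulr_ge0.
    rewrite -[leRHS]Hd; under [X in _ <= X - _]eq_bigr => j _ do rewrite -Hc.
    rewrite dual_identity; apply: ler_sum => i _.
    rewrite /s -addrA [_ - b i]addrC addrA mulrDr lerD2l.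
    rewrite -sumrN mulr_sumr; apply: ler_sum => j hj.
    have [h1 h2] := Hlm i j hj; have := Ha i j hj; rewrite (Hl i j hj).
    have := normr_ge0 (xh j); have := ler_norm (xh j); have : - xh j <= `|xh j| by rewrite -normrN ler_norm.
    move=> h3 h4 h5 h6.
    rewrite mulrN -mulNr -subr_ge0.
    have -> : alpha i j * (lam i j - mu i j) * xh j -
      - (lam i j + mu i j) * (alpha i j * `|xh j|) =
      alpha i j * (lam i j * (`|xh j| + xh j) + mu i j * (`|xh j| - xh j)) by ring.
    apply: mulr_ge0 => //; apply: addr_ge0; apply: mulr_ge0; lra.
  have : exists ih, pi ih != 0.
    apply/existsP; apply: contraT; rewrite negb_exists => /forallP H.
    move: Hp; rewrite big1 => [/eqP|i _]; first by rewrite eq_sym oner_eq0.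
    by apply/eqP; rewrite -[_ == _]negbK H.
  case=> ih hih; exists ih; split; last exact: Ha.
  + move/eqP: Hsum; rewrite psumr_eq0 => [/allP /(_ ih (mem_index_enum _))|i _];
      last by rewrite mulr_ge0.
    rewrite mulf_eq0 (negbTE hih) /= /s subr_eq0 => /eqP //.
  + by move=> i; have := s_ge0 i; rewrite /s subr_ge0.
move=> alpha [ih [H1 H2 H3]].
pose pi := fun i : 'I_m => ((i == ih)%:R : R).
pose lam := fun (i : 'I_m) (j : 'I_n) => pi i * (if xh j < 0 then 1 else 0).
pose mu := fun (i : 'I_m) (j : 'I_n) => pi i * (if xh j < 0 then 0 else 1).
pose c := fun j => \sum_(i < m) a i j * pi i
             + \sum_(i < m | j \in JJ i) alpha i j * (lam i j - mu i j).
pose u := fun i j => alpha i j * `|xh j|.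
exists c, u, pi, lam, mu.
have pisum : forall F : 'I_m -> R, \sum_(i < m) F i * pi i = F ih.
  move=> F; rewrite (@sum_single R m _ ih) /pi ?eqxx ?mulr1 // => i /negbTE ->.
  by rewrite mulr0.
split.
  rewrite dual_identity (@sum_single R m _ ih).
    rewrite /pi eqxx mul1r -H1.
    suff -> : \sum_(j in JJ ih) alpha ih j * (lam ih j - mu ih j) * xh j =
       - \sum_(j in JJ ih) alpha ih j * `|xh j| by lra.
    rewrite -sumrN; apply: eq_bigr => j _; rewrite /lam /mu /pi eqxx !mul1r.
    case: (ltrP (xh j) 0) => hx.
      rewrite ltr0_norm //; ring.
    rewrite ger0_norm //; ring.
  move=> i hi; rewrite /pi (negbTE hi) mul0r add0r.
  by rewrite big1 // => j _; rewrite /lam /mu /pi (negbTE hi) !mul0r subrr mulr0 mul0r.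
split.
  move=> i j hj; rewrite /u; have := H3 i j hj => ha.
  case: (ltrP (xh j) 0) => hx.
    rewrite ltr0_norm //; split; nra.
  rewrite ger0_norm //; split; nra.
split; first exact: H2.
split; first exact: H3.
split; first by rewrite -(pisum (fun _ => 1)); apply: eq_bigr => i _; rewrite mul1r.
split; first by [].
split.
  move=> i j _; rewrite /lam /mu -mulrDr; case: ifP => _; rewrite ?addr0 ?add0r mulr1 //.
split; first by move=> i; rewrite /pi ler0n.
move=> i j _; rewrite /lam /mu; split; apply: mulr_ge0; rewrite ?ler0n //; case: ifP => _ //.
Qed.
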